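(* If $\Gamma_G$ is population monotonic, then $G$ has no induced subgraph isomorphic to the path $P_5$ (five vertices, four edges forming a path) and no induced subgraph isomorphic to the cycle $C_5$.
   Context: $G=(V,E;w)$ is a finite simple graph with edge weights $w:E\to\mathbb{R}$, $w_e>0$ for all $e\in E$. The matching game on $G$ is the cooperative game $\Gamma_G=(N,\gamma)$ with player set $N=V$ and, for $S\subseteq N$, $\gamma(S)$ equal to the maximum weight of a matching in the induced subgraph $G[S]$ (so $\gamma(\emptyset)=0$). A population monotonic allocation scheme (PMAS) is a family $(\boldsymbol{x}_S)_{\emptyset\neq S\subseteq N}$ with $\boldsymbol{x}_S=(x_{S,i})_{i\in S}\in\mathbb{R}^S$ such that (efficiency) $\sum_{i\in S}x_{S,i}=\gamma(S)$ for every nonempty $S\subseteq N$, and (monotonicity) $x_{S,i}\le x_{T,i}$ whenever $\emptyset\ne S\subseteq T\subseteq N$ and $i\in S$. $\Gamma_G$ is called population monotonic if it admits a PMAS. *)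

(* Defs.v *)
From HB Require Import structures.
From mathcomp Require Import all_boot all_order all_algebra.
Set Implicit Arguments. Unset Strict Implicit. Unset Printing Implicit Defensive.
Import Order.TTheory GRing.Theory Num.Theory.
Local Open Scope ring_scope.

(* A finite simple graph on vertex type V : finType is given by its edge set
   E : {set {set V}}, each edge being a 2-element subset of V.
   Edge weights are w : {set V} -> R (only values on edges matter). *)
Definition simple_graph (V : finType) (E : {set {set V}}) : Prop :=
  forall A, A \in E -> #|A| = 2%N.

Definition matching_in (V : finType) (E : {set {set V}}) (S : {set V})
  (M : {set {set V}}) : bool :=
  [&& M \subset E, [forall A in M, A \subset S] & trivIset M].

(* gamma(S) = maximum weight of a matching in G[S] (the empty matching has
   weight 0, so starting the max at 0 is harmless). *)
Definition gamma (R : realFieldType) (V : finType) (E : {set {set V}})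
  (w : {set V} -> R) (S : {set V}) : R :=
  \big[Num.max/0]_(M : {set {set V}} | matching_in E S M) \sum_(A in M) w A.

(* Population monotonic allocation scheme: x S i is the payoff of i in S. *)
Definition is_PMAS (R : realFieldType) (V : finType) (E : {set {set V}})
  (w : {set V} -> R) (x : {set V} -> V -> R) : Prop :=
  (forall S : {set V}, S != set0 -> \sum_(i in S) x S i = gamma E w S) /\
  (forall (S T : {set V}) (i : V), S != set0 -> S \subset T -> i \in S ->
      x S i <= x T i).

Definition population_monotonic (R : realFieldType) (V : finType)
  (E : {set {set V}}) (w : {set V} -> R) : Prop :=
  exists x : {set V} -> V -> R, is_PMAS E w x.

Definition has_induced (V : finType) (E : {set {set V}}) (n : nat)
  (adj : 'I_n -> 'I_n -> bool) : Prop :=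
  exists f : 'I_n -> V, injective f /\
    forall i j : 'I_n, ([set f i; f j] \in E) = adj i j.

Definition P5_adj (i j : 'I_5) : bool :=
  ((nat_of_ord i).+1 == j) || ((nat_of_ord j).+1 == i).

Definition C5_adj (i j : 'I_5) : bool :=
  (((nat_of_ord i).+1 %% 5)%N == j) || (((nat_of_ord j).+1 %% 5)%N == i).

(* Main.v *)
Require Import Defs.
From HB Require Import structures.
From mathcomp Require Import all_boot all_order all_algebra.
From mathcomp Require Import lra.
Import Order.TTheory GRing.Theory Num.Theory.
Local Open Scope ring_scope.

Lemma gamma_ge (R : realFieldType) (V : finType) (E : {set {set V}})
  (w : {set V} -> R) S M :
  matching_in E S M -> \sum_(A in M) w A <= gamma E w S.
Proof. by move=> HM; rewrite /gamma (bigD1 M) //= le_max lexx. Qed.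

Lemma gamma_le (R : realFieldType) (V : finType) (E : {set {set V}})
  (w : {set V} -> R) S B : 0 <= B ->
  (forall M, matching_in E S M -> \sum_(A in M) w A <= B) -> gamma E w S <= B.
Proof.
move=> B0 H; rewrite /gamma; apply: (big_ind (fun y => y <= B)) => //.
by move=> x y hx hy; rewrite ge_max hx hy.
Qed.

Lemma sum_sub1 (R : realFieldType) (V : finType) (w : {set V} -> R)
  (M : {set {set V}}) S : M \subset [set S] -> 0 <= w S -> \sum_(A in M) w A <= w S.
Proof.
rewrite subset1 => /orP[/eqP-> _|/eqP-> ]; first by rewrite big_set1.
by rewrite big_set0.
Qed.
Arguments sum_sub1 {R V w M S}.

Lemma two_sub3 (V : finType) (a b c : V) (A : {set V}) :
  A \subset [set a; b; c] -> #|A| = 2%N ->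
  A = [set a; b] \/ A = [set b; c] \/ A = [set a; c].
Proof.
move=> sub /eqP/cards2P [x [y [xy eA]]].
have hx : x \in [set a; b; c] by apply: (subsetP sub); rewrite eA !inE eqxx.
have hy : y \in [set a; b; c] by apply: (subsetP sub); rewrite eA !inE eqxx orbT.
rewrite eA; move: xy hx hy; rewrite !inE => xy /orP[/orP[]|]/eqP ex /orP[/orP[]|]/eqP ey;
  subst x y;
  by [rewrite eqxx in xy | left | right; left | right; right
     | left; rewrite setUC | right; left; rewrite setUC | right; right; rewrite setUC].
Qed.
Arguments two_sub3 {V a b c A}.

Lemma gamma_pair (R : realFieldType) (V : finType) (E : {set {set V}})
  (w : {set V} -> R) (a b : V) :
  simple_graph E -> a != b -> [set a; b] \in E -> 0 < w [set a; b] ->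
  gamma E w [set a; b] = w [set a; b].
Proof.
move=> SG ab HE wp; apply/eqP; rewrite eq_le; apply/andP; split.
  apply: gamma_le; first exact: ltW.
  move=> M /and3P[ME MS _]; apply: sum_sub1; last exact: ltW.
  apply/subsetP => A AM; rewrite inE.
  have AS : A \subset [set a; b] := (forall_inP MS) A AM.
  by rewrite eqEcard AS cards2 ab (SG A (subsetP ME A AM)).
have HM : matching_in E [set a; b] [set [set a; b]].
  rewrite /matching_in sub1set HE /=; apply/andP; split.
    by apply/forall_inP => A; rewrite inE => /eqP->; exact: subxx.
  apply/trivIsetP => A B; rewrite !inE => /eqP-> /eqP->; by rewrite eqxx.
by have := @gamma_ge _ _ E w _ _ HM; rewrite big_set1.
Qed.

Lemma gamma_triple (R : realFieldType) (V : finType) (E : {set {set V}})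
  (w : {set V} -> R) (a b c : V) :
  simple_graph E -> (forall A, A \in E -> 0 < w A) ->
  a != b -> b != c -> a != c ->
  [set a; b] \in E -> [set b; c] \in E -> [set a; c] \notin E ->
  gamma E w [set a; b; c] <= Num.max (w [set a; b]) (w [set b; c]).
Proof.
move=> SG wp ab bc ac Hab Hbc Hac.
have wab := ltW (wp _ Hab); have wbc := ltW (wp _ Hbc).
apply: gamma_le; first by rewrite le_max wab.
move=> M /and3P[ME MS MT].
have HA : forall A, A \in M -> A = [set a; b] \/ A = [set b; c].
  move=> A AM.
  case: (two_sub3 ((forall_inP MS) A AM) (SG A (subsetP ME A AM))) => [->|[->|eA]];
    [by left|by right|].
  by move: (subsetP ME A AM); rewrite eA (negbTE Hac).
have notboth : ~~ (([set a; b] \in M) && ([set b; c] \in M)).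
  apply/andP => -[h1 h2].
  have neq : [set a; b] != [set b; c].
    apply/eqP => e; have : a \in [set b; c] by rewrite -e !inE eqxx.
    by rewrite !inE (negbTE ab) (negbTE ac).
  have dj := trivIsetP MT _ _ h1 h2 neq.
  have := disjointFr dj (_ : b \in [set a; b]).
  by rewrite !inE eqxx orbT => /(_ isT).
case: (boolP ([set a; b] \in M)) => h1.
  apply: le_trans (sum_sub1 _ wab) _; last by rewrite le_max lexx.
  apply/subsetP => A AM; rewrite inE; case: (HA A AM) => e; first by rewrite e.
  by rewrite e in AM; rewrite h1 AM in notboth.
apply: le_trans (sum_sub1 _ wbc) _; last by rewrite le_max lexx orbT.
apply/subsetP => A AM; rewrite inE; case: (HA A AM) => e; last by rewrite e.
by rewrite e in AM; rewrite AM in h1.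
Qed.

Lemma sum2 (R : realFieldType) (V : finType) (F : V -> R) (a b : V) :
  a != b -> \sum_(i in [set a; b]) F i = F a + F b.
Proof. by move=> ab; rewrite big_setU1 ?inE // big_set1. Qed.

Lemma sum3 (R : realFieldType) (V : finType) (F : V -> R) (a b c : V) :
  a != b -> b != c -> a != c ->
  \sum_(i in [set a; b; c]) F i = F a + F b + F c.
Proof.
move=> ab bc ac; rewrite -setUA big_setU1; last by rewrite !inE negb_or ab ac.
rewrite sum2 //=; exact: addrA.
Qed.

Lemma key (R : realFieldType) (V : finType) (E : {set {set V}})
  (w : {set V} -> R) (x : {set V} -> V -> R) (a b c : V) :
  simple_graph E -> (forall A, A \in E -> 0 < w A) -> is_PMAS E w x ->
  a != b -> b != c -> a != c ->
  [set a; b] \in E -> [set b; c] \in E -> [set a; c] \notin E ->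
  Num.min (w [set a; b]) (w [set b; c]) <= x [set a; b] b /\
  Num.min (w [set a; b]) (w [set b; c]) <= x [set b; c] b.
Proof.
move=> SG wp [eff mon] ab bc ac Hab Hbc Hac.
have ne2 : forall u v : V, [set u; v] != set0.
  by move=> u v; apply/set0Pn; exists u; rewrite !inE eqxx.
have ne3 : [set a; b; c] != set0 by apply/set0Pn; exists a; rewrite !inE eqxx.
have e1 := eff _ (ne2 a b); rewrite sum2 // gamma_pair // ?wp // in e1.
have e2 := eff _ (ne2 b c); rewrite sum2 // gamma_pair // ?wp // in e2.
have e3 := eff _ ne3; rewrite sum3 // in e3.
have g3 := @gamma_triple _ _ E w a b c SG wp ab bc ac Hab Hbc Hac.
have s1 : [set a; b] \subset [set a; b; c].
  by apply/subsetP => z; rewrite !inE => /orP[]->; rewrite ?orbT.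
have s2 : [set b; c] \subset [set a; b; c].
  by apply/subsetP => z; rewrite !inE => /orP[]->; rewrite ?orbT.
have m1 := mon _ _ a (ne2 a b) s1 (_ : a \in _).
have m2 := mon _ _ b (ne2 a b) s1 (_ : b \in _).
have m3 := mon _ _ b (ne2 b c) s2 (_ : b \in _).
have m4 := mon _ _ c (ne2 b c) s2 (_ : c \in _).
rewrite !inE !eqxx ?orbT in m1 m2 m3 m4.
have m1' := m1 isT; have m2' := m2 isT; have m3' := m3 isT; have m4' := m4 isT.
rewrite -e3 in g3.
move: g3 e1 e2 m1' m2' m3' m4'.
case: (leP (w [set a; b]) (w [set b; c])) => h; lra.
Qed.

Lemma no_five (R : realFieldType) (V : finType) (E : {set {set V}})
  (w : {set V} -> R) (v0 v1 v2 v3 v4 : V) :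
  simple_graph E -> (forall A, A \in E -> 0 < w A) -> population_monotonic E w ->
  v0 != v1 -> v1 != v2 -> v0 != v2 -> v2 != v3 -> v1 != v3 -> v3 != v4 -> v2 != v4 ->
  [set v0; v1] \in E -> [set v1; v2] \in E -> [set v2; v3] \in E -> [set v3; v4] \in E ->
  [set v0; v2] \notin E -> [set v1; v3] \notin E -> [set v2; v4] \notin E -> False.
Proof.
move=> SG wp [x Hx] d01 d12 d02 d23 d13 d34 d24 E01 E12 E23 E34 N02 N13 N24.
have [k1 _] := @key _ _ E w x v0 v1 v2 SG wp Hx d01 d12 d02 E01 E12 N02.
have [k2 k3] := @key _ _ E w x v1 v2 v3 SG wp Hx d12 d23 d13 E12 E23 N13.
have [k4 _] := @key _ _ E w x v2 v3 v4 SG wp Hx d23 d34 d24 E23 E34 N24.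
have [_ k1'] := @key _ _ E w x v0 v1 v2 SG wp Hx d01 d12 d02 E01 E12 N02.
have ne2 : forall u v : V, [set u; v] != set0.
  by move=> u v; apply/set0Pn; exists u; rewrite !inE eqxx.
have e1 := (proj1 Hx) _ (ne2 v1 v2); rewrite sum2 // gamma_pair // ?wp // in e1.
have e2 := (proj1 Hx) _ (ne2 v2 v3); rewrite sum2 // gamma_pair // ?wp // in e2.
have p0 := wp _ E01; have p1 := wp _ E12; have p2 := wp _ E23; have p3 := wp _ E34.
move: k1' k2 k3 k4 e1 e2 p0 p1 p2 p3.
case: (leP (w [set v0; v1]) (w [set v1; v2])) => h1;
case: (leP (w [set v1; v2]) (w [set v2; v3])) => h2;
case: (leP (w [set v2; v3]) (w [set v3; v4])) => h3; lra.
Qed.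

Theorem mainTheorem10 (R : realFieldType) (V : finType) (E : {set {set V}})
  (w : {set V} -> R) :
  simple_graph E ->
  (forall A, A \in E -> 0 < w A) ->
  population_monotonic E w ->
  ~ has_induced E P5_adj /\ ~ has_induced E C5_adj.
Proof.
move=> SG wp PM; split => -[f [finj Hf]].
  apply: (@no_five _ _ E w (f (@Ordinal 5 0 isT)) (f (@Ordinal 5 1 isT))
    (f (@Ordinal 5 2 isT)) (f (@Ordinal 5 3 isT)) (f (@Ordinal 5 4 isT)) SG wp PM);
    by rewrite ?(inj_eq finj) ?Hf.
apply: (@no_five _ _ E w (f (@Ordinal 5 0 isT)) (f (@Ordinal 5 1 isT))
  (f (@Ordinal 5 2 isT)) (f (@Ordinal 5 3 isT)) (f (@Ordinal 5 4 isT)) SG wp PM);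
  by rewrite ?(inj_eq finj) ?Hf.
Qed.
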